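(* Every LAD-AG-groupoid $S$ is paramedial, i.e. $(ab)(cd)=(db)(ca)$ for all $a,b,c,d\in S$, and is left nuclear square, i.e. $a^2(bc)=(a^2b)c$ for all $a,b,c\in S$, where $a^2=aa$.
   Context: A groupoid is a set $S$ with a binary operation written as juxtaposition; $ab\cdot c$ means $(ab)c$ and $a\cdot bc$ means $a(bc)$. An AG-groupoid is a groupoid satisfying the left invertive law $(ab)c=(cb)a$ for all $a,b,c\in S$. An LAD-AG-groupoid (left abelian distributive AG-groupoid) is an AG-groupoid satisfying $a(bc)=(ab)(ca)$ for all $a,b,c\in S$. *)

(* Defs.v *)
Definition left_invertive {S : Type} (op : S -> S -> S) : Prop :=
  forall a b c : S, op (op a b) c = op (op c b) a.

Definition AG_groupoid {S : Type} (op : S -> S -> S) : Prop :=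
  left_invertive op.

Definition left_abelian_distributive {S : Type} (op : S -> S -> S) : Prop :=
  forall a b c : S, op a (op b c) = op (op a b) (op c a).

Definition LAD_AG_groupoid {S : Type} (op : S -> S -> S) : Prop :=
  AG_groupoid op /\ left_abelian_distributive op.

Definition paramedial {S : Type} (op : S -> S -> S) : Prop :=
  forall a b c d : S, op (op a b) (op c d) = op (op d b) (op c a).

Definition left_nuclear_square {S : Type} (op : S -> S -> S) : Prop :=
  forall a b c : S, op (op a a) (op b c) = op (op (op a a) b) c.

(* Main.v *)
Require Import Defs.

Ltac step LI LAD := repeat (first [ exact (LI _ _ _) | exact (LAD _ _ _) | exact (eq_sym (LAD _ _ _)) | reflexivity | f_equal ]).

Theorem corollary1 (S : Type) (op : S -> S -> S) :
  LAD_AG_groupoid op -> paramedial op /\ left_nuclear_square op.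
Proof.
  intros [LI LAD].
  unfold AG_groupoid, left_invertive in LI.
  unfold left_abelian_distributive in LAD.
  split.
  - intros a b c d.
    transitivity (op (op (op a b) c) (op d (op a b))); [step LI LAD|].
    transitivity (op (op (op d (op a b)) c) (op a b)); [step LI LAD|].
    transitivity (op (op (op c (op a b)) d) (op a b)); [step LI LAD|].
    transitivity (op (op (op a b) d) (op c (op a b))); [step LI LAD|].
    transitivity (op (op a b) (op d c)); [step LI LAD|].
    transitivity (op (op (op d c) b) a); [step LI LAD|].
    transitivity (op (op (op b c) d) a); [step LI LAD|].
    transitivity (op (op a d) (op b c)); [step LI LAD|].
    transitivity (op (op (op a d) b) (op c (op a d))); [step LI LAD|].
    transitivity (op (op (op c (op a d)) b) (op a d)); [step LI LAD|].
    transitivity (op (op (op (op c a) (op d c)) b) (op a d)); [step LI LAD|].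
    transitivity (op (op (op (op (op d c) a) c) b) (op a d)); [step LI LAD|].
    transitivity (op (op (op (op (op a c) d) c) b) (op a d)); [step LI LAD|].
    transitivity (op (op (op (op c d) (op a c)) b) (op a d)); [step LI LAD|].
    transitivity (op (op (op b (op a c)) (op c d)) (op a d)); [step LI LAD|].
    transitivity (op (op (op a d) (op c d)) (op b (op a c))); [step LI LAD|].
    transitivity (op (op (op (op c d) d) a) (op b (op a c))); [step LI LAD|].
    transitivity (op (op (op (op d d) c) a) (op b (op a c))); [step LI LAD|].
    transitivity (op (op (op a c) (op d d)) (op b (op a c))); [step LI LAD|].
    transitivity (op (op a c) (op (op d d) b)); [step LI LAD|].
    transitivity (op (op a c) (op (op b d) d)); [step LI LAD|].
    transitivity (op (op (op a c) (op b d)) (op d (op a c))); [step LI LAD|].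
    transitivity (op (op (op d (op a c)) (op b d)) (op a c)); [step LI LAD|].
    transitivity (op (op (op (op b d) (op a c)) d) (op a c)); [step LI LAD|].
    transitivity (op (op (op a c) d) (op (op b d) (op a c))); [step LI LAD|].
    transitivity (op (op (op d c) a) (op (op b d) (op a c))); [step LI LAD|].
    transitivity (op (op (op (op b d) (op a c)) a) (op d c)); [step LI LAD|].
    transitivity (op (op (op (op (op a c) d) b) a) (op d c)); [step LI LAD|].
    transitivity (op (op (op (op (op d c) a) b) a) (op d c)); [step LI LAD|].
    transitivity (op (op (op (op b a) (op d c)) a) (op d c)); [step LI LAD|].
    transitivity (op (op (op a (op d c)) (op b a)) (op d c)); [step LI LAD|].
    transitivity (op (op (op d c) (op b a)) (op a (op d c))); [step LI LAD|].
    transitivity (op (op d c) (op (op b a) a)); [step LI LAD|].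
    transitivity (op (op d c) (op (op a a) b)); [step LI LAD|].
    transitivity (op (op (op d c) (op a a)) (op b (op d c))); [step LI LAD|].
    transitivity (op (op (op b (op d c)) (op a a)) (op d c)); [step LI LAD|].
    transitivity (op (op (op (op a a) (op d c)) b) (op d c)); [step LI LAD|].
    transitivity (op (op (op d c) b) (op (op a a) (op d c))); [step LI LAD|].
    transitivity (op (op d c) (op b (op a a))); [step LI LAD|].
    transitivity (op (op (op b (op a a)) c) d); [step LI LAD|].
    transitivity (op (op (op (op b a) (op a b)) c) d); [step LI LAD|].
    transitivity (op (op (op c (op a b)) (op b a)) d); [step LI LAD|].
    transitivity (op (op d (op b a)) (op c (op a b))); [step LI LAD|].
    transitivity (op (op d (op b a)) (op (op c a) (op b c))); [step LI LAD|].
    transitivity (op (op d (op b a)) (op (op (op b c) a) c)); [step LI LAD|].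
    transitivity (op (op d (op b a)) (op (op (op a c) b) c)); [step LI LAD|].
    transitivity (op (op d (op b a)) (op (op c b) (op a c))); [step LI LAD|].
    transitivity (op (op d (op b a)) (op c (op b a))); [step LI LAD|].
    transitivity (op (op (op d b) (op a d)) (op c (op b a))); [step LI LAD|].
    transitivity (op (op (op c (op b a)) (op a d)) (op d b)); [step LI LAD|].
    transitivity (op (op (op (op a d) (op b a)) c) (op d b)); [step LI LAD|].
    transitivity (op (op (op d b) c) (op (op a d) (op b a))); [step LI LAD|].
    transitivity (op (op (op d b) c) (op a (op d b))); [step LI LAD|].
    transitivity (op (op d b) (op c a)); [step LI LAD|].
    reflexivity.
  - intros a b c.
    transitivity (op (op (op a a) b) (op c (op a a))); [step LI LAD|].
    transitivity (op (op (op b a) a) (op c (op a a))); [step LI LAD|].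
    transitivity (op (op (op c (op a a)) a) (op b a)); [step LI LAD|].
    transitivity (op (op (op (op c a) (op a c)) a) (op b a)); [step LI LAD|].
    transitivity (op (op (op a (op a c)) (op c a)) (op b a)); [step LI LAD|].
    transitivity (op (op a (op (op a c) c)) (op b a)); [step LI LAD|].
    transitivity (op a (op (op (op a c) c) b)); [step LI LAD|].
    transitivity (op a (op (op (op c c) a) b)); [step LI LAD|].
    transitivity (op a (op (op b a) (op c c))); [step LI LAD|].
    transitivity (op (op a (op b a)) (op (op c c) a)); [step LI LAD|].
    transitivity (op (op (op (op c c) a) (op b a)) a); [step LI LAD|].
    transitivity (op (op (op (op b a) a) (op c c)) a); [step LI LAD|].
    transitivity (op (op a (op c c)) (op (op b a) a)); [step LI LAD|].
    transitivity (op a (op (op c c) (op b a))); [step LI LAD|].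
    transitivity (op a (op (op (op b a) c) c)); [step LI LAD|].
    transitivity (op (op a (op (op b a) c)) (op c a)); [step LI LAD|].
    transitivity (op (op a (op (op c a) b)) (op c a)); [step LI LAD|].
    transitivity (op (op (op a (op c a)) (op b a)) (op c a)); [step LI LAD|].
    transitivity (op (op (op c a) (op b a)) (op a (op c a))); [step LI LAD|].
    transitivity (op (op c a) (op (op b a) a)); [step LI LAD|].
    transitivity (op (op c a) (op (op a a) b)); [step LI LAD|].
    transitivity (op (op (op c a) (op a a)) (op b (op c a))); [step LI LAD|].
    transitivity (op (op (op b (op c a)) (op a a)) (op c a)); [step LI LAD|].
    transitivity (op (op (op (op a a) (op c a)) b) (op c a)); [step LI LAD|].
    transitivity (op (op (op c a) b) (op (op a a) (op c a))); [step LI LAD|].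
    transitivity (op (op (op c a) b) (op (op (op c a) a) a)); [step LI LAD|].
    transitivity (op (op (op c a) b) (op (op (op a a) c) a)); [step LI LAD|].
    transitivity (op (op (op c a) b) (op (op a c) (op a a))); [step LI LAD|].
    transitivity (op (op (op c a) b) (op a (op c a))); [step LI LAD|].
    transitivity (op (op c a) (op b a)); [step LI LAD|].
    transitivity (op (op (op b a) a) c); [step LI LAD|].
    transitivity (op (op (op a a) b) c); [step LI LAD|].
    reflexivity.
Qed.
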